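(* Let $A$ be an $\Omega$-magma in a braided monoidal category $\mathcal C$. Let $\mathcal D$ be a full subcategory of $\mathbf{Comeas}(A,A)$ having an initial object $\rho_0\colon A\to A\otimes B_0$, and let $\mathbf{Coact}(A)(\mathcal D)$ be the full subcategory of $\mathbf{Coact}(A)$ consisting of the coactions whose underlying comeasurings belong to $\mathcal D$. Suppose that $\mathcal D$ is closed under coarsenings, and that the canonical isomorphism $A\to A\otimes\mathbbm 1$ (a comeasuring for the monoid $\mathbbm 1$) and the comeasuring $(\rho_0\otimes\mathrm{id}_{B_0})\rho_0\colon A\to A\otimes B_0\otimes B_0$ (for the monoid $B_0\otimes B_0$) are objects of $\mathcal D$. Then the monoid $B_0$ admits a unique comonoid structure turning $\rho_0$ into a coaction, and this coaction is an initial object of $\mathbf{Coact}(A)(\mathcal D)$.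
   Context: Fix a set $\Omega$ with maps $s,t\colon\Omega\to\mathbb Z_{\ge0}$. An $\Omega$-magma is an object $A$ with morphisms $\omega_A\colon A^{\otimes s(\omega)}\to A^{\otimes t(\omega)}$, $\omega\in\Omega$ ($A^{\otimes0}=\mathbbm 1$, no axioms). For a monoid $(Q,\mu,u)$ and $\rho_i\colon A_i\to B_i\otimes Q$, $\rho_1\tilde\otimes\rho_2:=(\mathrm{id}\otimes\mu)(\mathrm{id}_{B_1}\otimes c_{Q,B_2}\otimes\mathrm{id}_Q)(\rho_1\otimes\rho_2)$, $c$ the braiding; $\rho^{\tilde\otimes n}$ by iteration, $\rho^{\tilde\otimes0}=(\mathbbm 1\xrightarrow{u}Q\cong\mathbbm 1\otimes Q)$. A comeasuring $\rho\colon A\to B\otimes Q$ ($Q$ a monoid) satisfies $(\omega_B\otimes\mathrm{id}_Q)\rho^{\tilde\otimes s(\omega)}=\rho^{\tilde\otimes t(\omega)}\omega_A$ for all $\omega$. $\mathbf{Comeas}(A,A)$: objects comeasurings $A\to A\otimes Q$, morphisms monoid homomorphisms $\varphi$ with $(\mathrm{id}_A\otimes\varphi)\rho_1=\rho_2$. $\mathcal D$ is closed under coarsenings if for every object $\rho\colon A\to A\otimes Q_1$ of $\mathcal D$ and every monoid homomorphism $\tau\colon Q_1\to Q_2$, $(\mathrm{id}_A\otimes\tau)\rho$ is in $\mathcal D$. For a bimonoid $B$ (monoid and comonoid with $\Delta,\varepsilon$ monoid homomorphisms, $B\otimes B$ a monoid via the braiding), a coaction of $B$ on $A$ is a comeasuring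 $\rho\colon A\to A\otimes B$ that also makes $A$ a right $B$-comodule. $\mathbf{Coact}(A)$: objects coactions $A\to A\otimes B$ ($B$ arbitrary bimonoid), morphisms bimonoid homomorphisms $\varphi$ with $(\mathrm{id}_A\otimes\varphi)\rho_1=\rho_2$. *)

(* Defs.v *)
(* Hom-sets are types and equality of morphisms is Leibniz equality. *)
From Stdlib Require Import Arith.

Class BMCData (ob : Type) (hom : ob -> ob -> Type) := {
  comp : forall X Y Z : ob, hom Y Z -> hom X Y -> hom X Z;
  idm : forall X : ob, hom X X;
  tens : ob -> ob -> ob;
  tensm : forall X X' Y Y' : ob, hom X X' -> hom Y Y' -> hom (tens X Y) (tens X' Y');
  unit_ob : ob;
  assoc : forall X Y Z : ob, hom (tens (tens X Y) Z) (tens X (tens Y Z));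
  assoc_inv : forall X Y Z : ob, hom (tens X (tens Y Z)) (tens (tens X Y) Z);
  lunit : forall X : ob, hom (tens unit_ob X) X;
  lunit_inv : forall X : ob, hom X (tens unit_ob X);
  runit : forall X : ob, hom (tens X unit_ob) X;
  runit_inv : forall X : ob, hom X (tens X unit_ob);
  braid : forall X Y : ob, hom (tens X Y) (tens Y X);
  braid_inv : forall X Y : ob, hom (tens Y X) (tens X Y)
}.

Arguments comp {ob hom _ X Y Z} _ _.
Arguments idm {ob hom _} X.
Arguments tens {ob hom _} _ _.
Arguments tensm {ob hom _ X X' Y Y'} _ _.
Arguments unit_ob {ob hom _}.
Arguments assoc {ob hom _} X Y Z.
Arguments assoc_inv {ob hom _} X Y Z.
Arguments lunit {ob hom _} X.
Arguments lunit_inv {ob hom _} X.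
Arguments runit {ob hom _} X.
Arguments runit_inv {ob hom _} X.
Arguments braid {ob hom _} X Y.
Arguments braid_inv {ob hom _} X Y.

Declare Scope cat_scope.
Delimit Scope cat_scope with cat.
Notation "g ∘ f" := (comp g f) (at level 40, left associativity) : cat_scope.
Notation "X ⊗ Y" := (tens X Y) (at level 34, right associativity) : cat_scope.
Notation "f ⊗' g" := (tensm f g) (at level 34, right associativity) : cat_scope.
Notation "'𝟙'" := unit_ob : cat_scope.
Open Scope cat_scope.

Record is_bmc (ob : Type) (hom : ob -> ob -> Type) (C : @BMCData ob hom) : Prop := {
  comp_idl : forall X Y (f : hom X Y), idm Y ∘ f = f;
  comp_idr : forall X Y (f : hom X Y), f ∘ idm X = f;
  comp_assoc : forall X Y Z W (f : hom X Y) (g : hom Y Z) (h : hom Z W),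
      h ∘ (g ∘ f) = (h ∘ g) ∘ f;
  tensm_id : forall X Y, idm X ⊗' idm Y = idm (X ⊗ Y);
  tensm_comp : forall X1 X2 X3 Y1 Y2 Y3 (f : hom X1 X2) (f' : hom X2 X3)
      (g : hom Y1 Y2) (g' : hom Y2 Y3),
      (f' ∘ f) ⊗' (g' ∘ g) = (f' ⊗' g') ∘ (f ⊗' g);
  assoc_iso1 : forall X Y Z, assoc_inv X Y Z ∘ assoc X Y Z = idm ((X ⊗ Y) ⊗ Z);
  assoc_iso2 : forall X Y Z, assoc X Y Z ∘ assoc_inv X Y Z = idm (X ⊗ (Y ⊗ Z));
  assoc_nat : forall X X' Y Y' Z Z' (f : hom X X') (g : hom Y Y') (h : hom Z Z'),
      assoc X' Y' Z' ∘ ((f ⊗' g) ⊗' h) = (f ⊗' (g ⊗' h)) ∘ assoc X Y Z;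
  lunit_iso1 : forall X, lunit_inv X ∘ lunit X = idm (𝟙 ⊗ X);
  lunit_iso2 : forall X, lunit X ∘ lunit_inv X = idm X;
  lunit_nat : forall X Y (f : hom X Y), lunit Y ∘ (idm 𝟙 ⊗' f) = f ∘ lunit X;
  runit_iso1 : forall X, runit_inv X ∘ runit X = idm (X ⊗ 𝟙);
  runit_iso2 : forall X, runit X ∘ runit_inv X = idm X;
  runit_nat : forall X Y (f : hom X Y), runit Y ∘ (f ⊗' idm 𝟙) = f ∘ runit X;
  pentagon : forall W X Y Z,
      assoc W X (Y ⊗ Z) ∘ assoc (W ⊗ X) Y Z
      = (idm W ⊗' assoc X Y Z) ∘ assoc W (X ⊗ Y) Z ∘ (assoc W X Y ⊗' idm Z);
  triangle : forall X Y,
      (idm X ⊗' lunit Y) ∘ assoc X 𝟙 Y = runit X ⊗' idm Y;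
  braid_iso1 : forall X Y, braid_inv X Y ∘ braid X Y = idm (X ⊗ Y);
  braid_iso2 : forall X Y, braid X Y ∘ braid_inv X Y = idm (Y ⊗ X);
  braid_nat : forall X X' Y Y' (f : hom X X') (g : hom Y Y'),
      braid X' Y' ∘ (f ⊗' g) = (g ⊗' f) ∘ braid X Y;
  hexagon1 : forall X Y Z,
      assoc Y Z X ∘ braid X (Y ⊗ Z) ∘ assoc X Y Z
      = (idm Y ⊗' braid X Z) ∘ assoc Y X Z ∘ (braid X Y ⊗' idm Z);
  hexagon2 : forall X Y Z,
      assoc_inv Z X Y ∘ braid (X ⊗ Y) Z ∘ assoc_inv X Y Z
      = (braid X Z ⊗' idm Y) ∘ assoc_inv X Z Y ∘ (idm X ⊗' braid Y Z)
}.

Section Defs.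
Context {ob : Type} {hom : ob -> ob -> Type} {C : @BMCData ob hom}.

Fixpoint tpow (A : ob) (n : nat) : ob :=
  match n with
  | 0 => 𝟙
  | S k => match k with 0 => A | S _ => tpow A k ⊗ A end
  end.

Definition is_monoid (Q : ob) (mu : hom (Q ⊗ Q) Q) (u : hom 𝟙 Q) : Prop :=
  mu ∘ (mu ⊗' idm Q) = mu ∘ (idm Q ⊗' mu) ∘ assoc Q Q Q /\
  mu ∘ (u ⊗' idm Q) = lunit Q /\
  mu ∘ (idm Q ⊗' u) = runit Q.

Definition monoid_hom (Q1 : ob) (mu1 : hom (Q1 ⊗ Q1) Q1) (u1 : hom 𝟙 Q1)
    (Q2 : ob) (mu2 : hom (Q2 ⊗ Q2) Q2) (u2 : hom 𝟙 Q2) (f : hom Q1 Q2) : Prop :=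
  f ∘ mu1 = mu2 ∘ (f ⊗' f) /\ f ∘ u1 = u2.

Definition unit_mu : hom (𝟙 ⊗ 𝟙) 𝟙 := lunit 𝟙.
Definition unit_u : hom 𝟙 𝟙 := idm 𝟙.

Definition mid_swap (X Y Z W : ob) : hom ((X ⊗ Y) ⊗ (Z ⊗ W)) ((X ⊗ Z) ⊗ (Y ⊗ W)) :=
  assoc_inv X Z (Y ⊗ W) ∘ (idm X ⊗' assoc Z Y W) ∘ (idm X ⊗' (braid Y Z ⊗' idm W))
  ∘ (idm X ⊗' assoc_inv Y Z W) ∘ assoc X Y (Z ⊗ W).

Definition tmu (Q : ob) (mu : hom (Q ⊗ Q) Q) : hom ((Q ⊗ Q) ⊗ (Q ⊗ Q)) (Q ⊗ Q) :=
  (mu ⊗' mu) ∘ mid_swap Q Q Q Q.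
Definition tu (Q : ob) (u : hom 𝟙 Q) : hom 𝟙 (Q ⊗ Q) :=
  (u ⊗' u) ∘ lunit_inv 𝟙.

Definition is_comonoid (Q : ob) (d : hom Q (Q ⊗ Q)) (e : hom Q 𝟙) : Prop :=
  assoc Q Q Q ∘ (d ⊗' idm Q) ∘ d = (idm Q ⊗' d) ∘ d /\
  lunit Q ∘ (e ⊗' idm Q) ∘ d = idm Q /\
  runit Q ∘ (idm Q ⊗' e) ∘ d = idm Q.

Definition is_bimonoid (B : ob) (mu : hom (B ⊗ B) B) (u : hom 𝟙 B)
    (d : hom B (B ⊗ B)) (e : hom B 𝟙) : Prop :=
  is_monoid B mu u /\ is_comonoid B d e /\
  monoid_hom B mu u (B ⊗ B) (tmu B mu) (tu B u) d /\
  monoid_hom B mu u 𝟙 unit_mu unit_u e.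

Definition bimonoid_hom (B1 : ob) (mu1 : hom (B1 ⊗ B1) B1) (u1 : hom 𝟙 B1)
    (d1 : hom B1 (B1 ⊗ B1)) (e1 : hom B1 𝟙)
    (B2 : ob) (mu2 : hom (B2 ⊗ B2) B2) (u2 : hom 𝟙 B2)
    (d2 : hom B2 (B2 ⊗ B2)) (e2 : hom B2 𝟙) (f : hom B1 B2) : Prop :=
  monoid_hom B1 mu1 u1 B2 mu2 u2 f /\
  d2 ∘ f = (f ⊗' f) ∘ d1 /\ e2 ∘ f = e1.

(* rho1 ~⊗ rho2 = (id ⊗ mu)(id_{B1} ⊗ c_{Q,B2} ⊗ id_Q)(rho1 ⊗ rho2),
   with the associativity constraints made explicit. *)
Definition ttens (Q : ob) (mu : hom (Q ⊗ Q) Q) (A1 B1 A2 B2 : ob)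
    (r1 : hom A1 (B1 ⊗ Q)) (r2 : hom A2 (B2 ⊗ Q)) : hom (A1 ⊗ A2) ((B1 ⊗ B2) ⊗ Q) :=
  assoc_inv B1 B2 Q ∘ (idm B1 ⊗' (idm B2 ⊗' mu)) ∘ (idm B1 ⊗' assoc B2 Q Q)
  ∘ (idm B1 ⊗' (braid Q B2 ⊗' idm Q)) ∘ (idm B1 ⊗' assoc_inv Q B2 Q)
  ∘ assoc B1 Q (B2 ⊗ Q) ∘ (r1 ⊗' r2).

(* rho^{~⊗ n} : A^n -> B^n ⊗ Q;  rho^{~⊗0} = (𝟙 -u-> Q ≅ 𝟙 ⊗ Q),
   rho^{~⊗1} = rho, rho^{~⊗(n+2)} = rho^{~⊗(n+1)} ~⊗ rho. *)
Fixpoint rpow (Q : ob) (mu : hom (Q ⊗ Q) Q) (u : hom 𝟙 Q) (A B : ob)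
    (r : hom A (B ⊗ Q)) (n : nat) : hom (tpow A n) (tpow B n ⊗ Q) :=
  match n as n0 return hom (tpow A n0) (tpow B n0 ⊗ Q) with
  | 0 => lunit_inv Q ∘ u
  | S k =>
    (match k as k0 return
        hom (tpow A k0) (tpow B k0 ⊗ Q) -> hom (tpow A (S k0)) (tpow B (S k0) ⊗ Q)
     with
     | 0 => fun _ => r
     | S _ => fun prev => ttens Q mu _ _ _ _ prev r
     end) (rpow Q mu u A B r k)
  end.

Definition magma_ops (Omega : Type) (s t : Omega -> nat) (A : ob) : Type :=
  forall w : Omega, hom (tpow A (s w)) (tpow A (t w)).

Definition is_comeasuring (Omega : Type) (s t : Omega -> nat) (A B : ob)
    (opsA : magma_ops Omega s t A) (opsB : magma_ops Omega s t B)
    (Q : ob) (mu : hom (Q ⊗ Q) Q) (u : hom 𝟙 Q) (r : hom A (B ⊗ Q)) : Prop :=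
  forall w : Omega, (opsB w ⊗' idm Q) ∘ rpow Q mu u A B r (s w) = rpow Q mu u A B r (t w) ∘ opsA w.

Definition is_comodule (A B : ob) (d : hom B (B ⊗ B)) (e : hom B 𝟙)
    (r : hom A (A ⊗ B)) : Prop :=
  assoc_inv A B B ∘ (idm A ⊗' d) ∘ r = (r ⊗' idm B) ∘ r /\
  runit A ∘ (idm A ⊗' e) ∘ r = idm A.

Definition is_coaction (Omega : Type) (s t : Omega -> nat) (A : ob)
    (opsA : magma_ops Omega s t A) (B : ob) (mu : hom (B ⊗ B) B) (u : hom 𝟙 B)
    (d : hom B (B ⊗ B)) (e : hom B 𝟙) (r : hom A (A ⊗ B)) : Prop :=
  is_bimonoid B mu u d e /\ is_comeasuring Omega s t A A opsA opsA B mu u r /\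
  is_comodule A B d e r.

End Defs.

(* Main.v *)
Require Import Defs.

Section Coh.
Context {ob : Type} {hom : ob -> ob -> Type} {C : @BMCData ob hom} (HC : is_bmc ob hom C).

Lemma cA {X Y Z W} (f : hom X Y) (g : hom Y Z) (h : hom Z W) : h ∘ (g ∘ f) = h ∘ g ∘ f.
Proof. exact (comp_assoc _ _ _ HC _ _ _ _ f g h). Qed.
Lemma idl {X Y} (f : hom X Y) : idm Y ∘ f = f.
Proof. exact (comp_idl _ _ _ HC _ _ f). Qed.
Lemma idr {X Y} (f : hom X Y) : f ∘ idm X = f.
Proof. exact (comp_idr _ _ _ HC _ _ f). Qed.
Lemma tid X Y : idm X ⊗' idm Y = idm (X ⊗ Y).
Proof. exact (tensm_id _ _ _ HC X Y). Qed.
Lemma tcomp {X1 X2 X3 Y1 Y2 Y3} (f : hom X1 X2) (f' : hom X2 X3) (g : hom Y1 Y2) (g' : hom Y2 Y3) :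
  (f' ∘ f) ⊗' (g' ∘ g) = (f' ⊗' g') ∘ (f ⊗' g).
Proof. exact (tensm_comp _ _ _ HC _ _ _ _ _ _ f f' g g'). Qed.

Lemma ctx2 {A1 A2 A3} {g : hom A2 A3} {f : hom A1 A2} {k : hom A1 A3} :
  g ∘ f = k -> forall Z (X : hom Z A1), g ∘ (f ∘ X) = k ∘ X.
Proof. intros H Z X. rewrite cA, H. reflexivity. Qed.
Lemma ctx3 {A1 A2 A3 A4} {h : hom A3 A4} {g : hom A2 A3} {f : hom A1 A2} {k : hom A1 A4} :
  h ∘ g ∘ f = k -> forall Z (X : hom Z A1), h ∘ (g ∘ (f ∘ X)) = k ∘ X.
Proof. intros H Z X. rewrite !cA, H. reflexivity. Qed.
Lemma ra3 {A1 A2 A3 A4} {h : hom A3 A4} {g : hom A2 A3} {f : hom A1 A2} {k : hom A1 A4} :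
  h ∘ g ∘ f = k -> h ∘ (g ∘ f) = k.
Proof. intros H. rewrite cA, H. reflexivity. Qed.
Lemma ctx4 {A1 A2 A3 A4 A5} {i : hom A4 A5} {h : hom A3 A4} {g : hom A2 A3} {f : hom A1 A2} {k : hom A1 A5} :
  i ∘ h ∘ g ∘ f = k -> forall Z (X : hom Z A1), i ∘ (h ∘ (g ∘ (f ∘ X))) = k ∘ X.
Proof. intros H Z X. rewrite !cA, H. reflexivity. Qed.
Lemma ra4 {A1 A2 A3 A4 A5} {i : hom A4 A5} {h : hom A3 A4} {g : hom A2 A3} {f : hom A1 A2} {k : hom A1 A5} :
  i ∘ h ∘ g ∘ f = k -> i ∘ (h ∘ (g ∘ f)) = k.
Proof. intros H. rewrite !cA, H. reflexivity. Qed.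
Lemma ctx5 {A1 A2 A3 A4 A5 A6} {j : hom A5 A6} {i : hom A4 A5} {h : hom A3 A4} {g : hom A2 A3} {f : hom A1 A2} {k : hom A1 A6} :
  j ∘ i ∘ h ∘ g ∘ f = k -> forall Z (X : hom Z A1), j ∘ (i ∘ (h ∘ (g ∘ (f ∘ X)))) = k ∘ X.
Proof. intros H Z X. rewrite !cA, H. reflexivity. Qed.
Lemma ra5 {A1 A2 A3 A4 A5 A6} {j : hom A5 A6} {i : hom A4 A5} {h : hom A3 A4} {g : hom A2 A3} {f : hom A1 A2} {k : hom A1 A6} :
  j ∘ i ∘ h ∘ g ∘ f = k -> j ∘ (i ∘ (h ∘ (g ∘ f))) = k.
Proof. intros H. rewrite !cA, H. reflexivity. Qed.

Lemma tsl {X1 X2 X3 Y1 Y2} (f : hom X1 X2) (f' : hom X2 X3) (g : hom Y1 Y2) :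
  (f' ∘ f) ⊗' g = (f' ⊗' g) ∘ (f ⊗' idm Y1).
Proof. rewrite <- tcomp, idr. reflexivity. Qed.
Lemma tsr {X1 X2 Y1 Y2 Y3} (f : hom X1 X2) (g : hom Y1 Y2) (g' : hom Y2 Y3) :
  f ⊗' (g' ∘ g) = (f ⊗' g') ∘ (idm X1 ⊗' g).
Proof. rewrite <- tcomp, idr. reflexivity. Qed.

Ltac norm := repeat (rewrite tsl || rewrite tsr); repeat rewrite tid; repeat (rewrite idl || rewrite idr);
  repeat rewrite <- cA.
Ltac sh := match goal with |- ?G => idtac G end.
Tactic Notation "rw" uconstr(T) :=
  first [ rewrite (ctx5 T) | rewrite (ra5 T) | rewrite (ctx4 T) | rewrite (ra4 T)
        | rewrite (ctx3 T) | rewrite (ra3 T) | rewrite (ctx2 T) | rewrite T ]; norm.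
Tactic Notation "rwl" uconstr(T) := rw (eq_sym T).


Lemma aiso1 X Y Z : assoc_inv X Y Z ∘ assoc X Y Z = idm ((X ⊗ Y) ⊗ Z). Proof. exact (assoc_iso1 _ _ _ HC X Y Z). Qed.
Lemma aiso2 X Y Z : assoc X Y Z ∘ assoc_inv X Y Z = idm (X ⊗ (Y ⊗ Z)). Proof. exact (assoc_iso2 _ _ _ HC X Y Z). Qed.
Lemma liso1 X : lunit_inv X ∘ lunit X = idm (𝟙 ⊗ X). Proof. exact (lunit_iso1 _ _ _ HC X). Qed.
Lemma liso2 X : lunit X ∘ lunit_inv X = idm X. Proof. exact (lunit_iso2 _ _ _ HC X). Qed.
Lemma riso1 X : runit_inv X ∘ runit X = idm (X ⊗ 𝟙). Proof. exact (runit_iso1 _ _ _ HC X). Qed.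
Lemma riso2 X : runit X ∘ runit_inv X = idm X. Proof. exact (runit_iso2 _ _ _ HC X). Qed.
Lemma biso1 X Y : braid_inv X Y ∘ braid X Y = idm (X ⊗ Y). Proof. exact (braid_iso1 _ _ _ HC X Y). Qed.
Lemma biso2 X Y : braid X Y ∘ braid_inv X Y = idm (Y ⊗ X). Proof. exact (braid_iso2 _ _ _ HC X Y). Qed.
Lemma anat {X X' Y Y' Z Z'} (f : hom X X') (g : hom Y Y') (h : hom Z Z') :
  assoc X' Y' Z' ∘ ((f ⊗' g) ⊗' h) = (f ⊗' (g ⊗' h)) ∘ assoc X Y Z.
Proof. exact (assoc_nat _ _ _ HC _ _ _ _ _ _ f g h). Qed.
Lemma lnat {X Y} (f : hom X Y) : lunit Y ∘ (idm 𝟙 ⊗' f) = f ∘ lunit X.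
Proof. exact (lunit_nat _ _ _ HC _ _ f). Qed.
Lemma rnat {X Y} (f : hom X Y) : runit Y ∘ (f ⊗' idm 𝟙) = f ∘ runit X.
Proof. exact (runit_nat _ _ _ HC _ _ f). Qed.
Lemma bnat {X X' Y Y'} (f : hom X X') (g : hom Y Y') :
  braid X' Y' ∘ (f ⊗' g) = (g ⊗' f) ∘ braid X Y.
Proof. exact (braid_nat _ _ _ HC _ _ _ _ f g). Qed.
Lemma pent W X Y Z : assoc W X (Y ⊗ Z) ∘ assoc (W ⊗ X) Y Z
      = (idm W ⊗' assoc X Y Z) ∘ assoc W (X ⊗ Y) Z ∘ (assoc W X Y ⊗' idm Z).
Proof. exact (pentagon _ _ _ HC W X Y Z). Qed.
Lemma tri X Y : (idm X ⊗' lunit Y) ∘ assoc X 𝟙 Y = runit X ⊗' idm Y.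
Proof. exact (triangle _ _ _ HC X Y). Qed.
Lemma hex1 X Y Z : assoc Y Z X ∘ braid X (Y ⊗ Z) ∘ assoc X Y Z
      = (idm Y ⊗' braid X Z) ∘ assoc Y X Z ∘ (braid X Y ⊗' idm Z).
Proof. exact (hexagon1 _ _ _ HC X Y Z). Qed.
Lemma hex2 X Y Z : assoc_inv Z X Y ∘ braid (X ⊗ Y) Z ∘ assoc_inv X Y Z
      = (braid X Z ⊗' idm Y) ∘ assoc_inv X Z Y ∘ (idm X ⊗' braid Y Z).
Proof. exact (hexagon2 _ _ _ HC X Y Z). Qed.

Lemma cancel_r {X Y Z} (f g : hom Y Z) (k : hom X Y) (k' : hom Y X) :
  k ∘ k' = idm Y -> f ∘ k = g ∘ k -> f = g.
Proof. intros H E. rewrite <- (idr f), <- (idr g), <- H, !cA, E. reflexivity. Qed.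
Lemma cancel_l {X Y Z} (f g : hom X Y) (k : hom Y Z) (k' : hom Z Y) :
  k' ∘ k = idm Y -> k ∘ f = k ∘ g -> f = g.
Proof. intros H E. rewrite <- (idl f), <- (idl g), <- H, <- !cA, E. reflexivity. Qed.
Lemma tiso {X Y X' Y'} (f : hom X X') (f' : hom X' X) (g : hom Y Y') (g' : hom Y' Y) :
  f ∘ f' = idm X' -> g ∘ g' = idm Y' -> (f ⊗' g) ∘ (f' ⊗' g') = idm (X' ⊗ Y').
Proof. intros H1 H2. rewrite <- tcomp, H1, H2, tid. reflexivity. Qed.
Lemma ciso {X Y Z} (f : hom Y Z) (f' : hom Z Y) (g : hom X Y) (g' : hom Y X) :
  f ∘ f' = idm Z -> g ∘ g' = idm Y -> (f ∘ g) ∘ (g' ∘ f') = idm Z.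
Proof. intros H1 H2. rewrite <- !cA, (cA f' g' g), H2, idl, H1. reflexivity. Qed.

Lemma anat1 {X X' Y Z} (f : hom X X') :
  assoc X' Y Z ∘ ((f ⊗' idm Y) ⊗' idm Z) = (f ⊗' idm (Y ⊗ Z)) ∘ assoc X Y Z.
Proof. rewrite anat, tid. reflexivity. Qed.
Lemma anat3 {X Y Z Z'} (h : hom Z Z') :
  assoc X Y Z' ∘ (idm (X ⊗ Y) ⊗' h) = (idm X ⊗' (idm Y ⊗' h)) ∘ assoc X Y Z.
Proof. rewrite <- tid, anat. reflexivity. Qed.
Lemma a'nat {X X' Y Y' Z Z'} (f : hom X X') (g : hom Y Y') (h : hom Z Z') :
  assoc_inv X' Y' Z' ∘ (f ⊗' (g ⊗' h)) = ((f ⊗' g) ⊗' h) ∘ assoc_inv X Y Z.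
Proof.
  apply (cancel_l _ _ (assoc X' Y' Z') (assoc_inv X' Y' Z')); [apply aiso1|].
  rewrite cA, aiso2, idl, cA, anat, <- cA, aiso2, idr. reflexivity.
Qed.
Lemma a'nat1 {X X' Y Z} (f : hom X X') :
  assoc_inv X' Y Z ∘ (f ⊗' idm (Y ⊗ Z)) = ((f ⊗' idm Y) ⊗' idm Z) ∘ assoc_inv X Y Z.
Proof. rewrite <- tid, a'nat. reflexivity. Qed.
Lemma a'nat3 {X Y Z Z'} (h : hom Z Z') :
  assoc_inv X Y Z' ∘ (idm X ⊗' (idm Y ⊗' h)) = (idm (X ⊗ Y) ⊗' h) ∘ assoc_inv X Y Z.
Proof. rewrite a'nat, tid. reflexivity. Qed.
Lemma xch {X X' Y Y'} (f : hom X X') (g : hom Y Y') :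
  (f ⊗' idm Y') ∘ (idm X ⊗' g) = (idm X' ⊗' g) ∘ (f ⊗' idm Y).
Proof. rewrite <- !tcomp, !idl, !idr. reflexivity. Qed.
Lemma wl {W A1 A2 A3} {g : hom A2 A3} {f : hom A1 A2} {k : hom A1 A3} :
  g ∘ f = k -> (idm W ⊗' g) ∘ (idm W ⊗' f) = idm W ⊗' k.
Proof. intros H. rewrite <- tcomp, H, idl. reflexivity. Qed.
Lemma wr {W A1 A2 A3} {g : hom A2 A3} {f : hom A1 A2} {k : hom A1 A3} :
  g ∘ f = k -> (g ⊗' idm W) ∘ (f ⊗' idm W) = k ⊗' idm W.
Proof. intros H. rewrite <- tcomp, H, idl. reflexivity. Qed.
Lemma wl3 {W A1 A2 A3 A4} {h : hom A3 A4} {g : hom A2 A3} {f : hom A1 A2} {k : hom A1 A4} :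
  h ∘ g ∘ f = k -> (idm W ⊗' h) ∘ (idm W ⊗' g) ∘ (idm W ⊗' f) = idm W ⊗' k.
Proof. intros H. rewrite <- !tcomp, H, !idl. reflexivity. Qed.
Lemma wr3 {W A1 A2 A3 A4} {h : hom A3 A4} {g : hom A2 A3} {f : hom A1 A2} {k : hom A1 A4} :
  h ∘ g ∘ f = k -> (h ⊗' idm W) ∘ (g ⊗' idm W) ∘ (f ⊗' idm W) = k ⊗' idm W.
Proof. intros H. rewrite <- !tcomp, H, !idl. reflexivity. Qed.

Lemma F1 {X Y} (f g : hom X Y) : idm 𝟙 ⊗' f = idm 𝟙 ⊗' g -> f = g.
Proof.
  intros E. apply (cancel_r _ _ (lunit X) (lunit_inv X)); [apply liso2|].
  rewrite <- !lnat, E. reflexivity.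
Qed.
Lemma F2 {X Y} (f g : hom X Y) : f ⊗' idm 𝟙 = g ⊗' idm 𝟙 -> f = g.
Proof.
  intros E. apply (cancel_r _ _ (runit X) (runit_inv X)); [apply riso2|].
  rewrite <- !rnat, E. reflexivity.
Qed.

Lemma K1 X Y : lunit (X ⊗ Y) ∘ assoc 𝟙 X Y = lunit X ⊗' idm Y.
Proof.
  apply F1.
  apply (cancel_r _ _ (assoc 𝟙 (𝟙 ⊗ X) Y ∘ (assoc 𝟙 𝟙 X ⊗' idm Y))
                      ((assoc_inv 𝟙 𝟙 X ⊗' idm Y) ∘ assoc_inv 𝟙 (𝟙 ⊗ X) Y)).
  { apply ciso. apply aiso2. apply tiso. apply aiso2. apply idl. }
  norm.
  rwl (pent 𝟙 𝟙 X Y).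
  rw (tri 𝟙 (X ⊗ Y)).
  rwl (anat1 (runit 𝟙)).
  rwl (tri 𝟙 X).
  rw (anat (idm 𝟙) (lunit X) (idm Y)).
  reflexivity.
Qed.

Lemma K1' X Y : (lunit X ⊗' idm Y) ∘ assoc_inv 𝟙 X Y = lunit (X ⊗ Y).
Proof. rewrite <- K1, <- cA, aiso2, idr. reflexivity. Qed.
Lemma tri' X Y : (runit X ⊗' idm Y) ∘ assoc_inv X 𝟙 Y = idm X ⊗' lunit Y.
Proof. rewrite <- tri, <- cA, aiso2, idr. reflexivity. Qed.
Lemma K0 X : lunit (𝟙 ⊗ X) = idm 𝟙 ⊗' lunit X.
Proof.
  apply (cancel_l _ _ (lunit X) (lunit_inv X)); [apply liso1|].
  rewrite lnat. reflexivity.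
Qed.
Lemma K0' X : runit (X ⊗ 𝟙) = runit X ⊗' idm 𝟙.
Proof.
  apply (cancel_l _ _ (runit X) (runit_inv X)); [apply riso1|].
  rewrite rnat. reflexivity.
Qed.
Lemma K2 X Y : (idm X ⊗' runit Y) ∘ assoc X Y 𝟙 = runit (X ⊗ Y).
Proof.
  apply F2.
  apply (cancel_l _ _ (assoc X Y 𝟙) (assoc_inv X Y 𝟙)); [apply aiso1|].
  norm.
  rwl (tri (X ⊗ Y) 𝟙).
  rw (anat3 (X:=X) (Y:=Y) (lunit 𝟙)).
  rw (pent X Y 𝟙 𝟙).
  rw (wl (tri Y 𝟙)).
  rw (anat (idm X) (runit Y) (idm 𝟙)).
  reflexivity.
Qed.
Lemma K2' X Y : runit (X ⊗ Y) ∘ assoc_inv X Y 𝟙 = idm X ⊗' runit Y.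
Proof. rewrite <- K2, <- cA, aiso2, idr. reflexivity. Qed.
Lemma K3 : lunit 𝟙 = runit 𝟙.
Proof. apply F2. rewrite <- K1, <- tri, K0. reflexivity. Qed.
Lemma B1 X : lunit X ∘ braid X 𝟙 = runit X.
Proof.
  apply F2.
  apply (cancel_l _ _ (braid X 𝟙) (braid_inv X 𝟙)); [apply biso1|].
  norm.
  rwl (tri X 𝟙).
  rw (bnat (idm X) (lunit 𝟙)).
  rwl (K1 𝟙 X).
  rw (hex1 X 𝟙 𝟙).
  rw (lnat (braid X 𝟙)).
  rw (K1 X 𝟙).
  reflexivity.
Qed.
Lemma B2 X : runit X ∘ braid 𝟙 X = lunit X.
Proof.
  apply F1.
  apply (cancel_l _ _ (braid 𝟙 X) (braid_inv 𝟙 X)); [apply biso1|].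
  norm.
  rwl (tri' 𝟙 X).
  rw (bnat (runit 𝟙) (idm X)).
  rwl (K2' X 𝟙).
  rw (hex2 𝟙 𝟙 X).
  rw (rnat (braid 𝟙 X)).
  rw (K2' 𝟙 X).
  reflexivity.
Qed.

Lemma wn {X X' A B C' D'} {a : hom B C'} {p : hom A B} {q : hom D' C'} {b : hom A D'} (f : hom X X') :
  a ∘ p = q ∘ b -> (idm X' ⊗' a) ∘ (f ⊗' p) = (f ⊗' q) ∘ (idm X ⊗' b).
Proof. intros H. rewrite <- !tcomp, H, idl, idr. reflexivity. Qed.
Lemma wn' {X X' A B C' D'} {a : hom B C'} {p : hom A B} {q : hom D' C'} {b : hom A D'} (f : hom X X') :
  a ∘ p = q ∘ b -> (a ⊗' idm X') ∘ (p ⊗' f) = (q ⊗' f) ∘ (b ⊗' idm X).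
Proof. intros H. rewrite <- !tcomp, H, idl, idr. reflexivity. Qed.
Lemma tspl {X X' Y Y'} (f : hom X X') (g : hom Y Y') : f ⊗' g = (f ⊗' idm Y') ∘ (idm X ⊗' g).
Proof. rewrite <- tcomp, idl, idr. reflexivity. Qed.
Lemma tspr {X X' Y Y'} (f : hom X X') (g : hom Y Y') : f ⊗' g = (idm X' ⊗' g) ∘ (f ⊗' idm Y).
Proof. rewrite <- tcomp, idl, idr. reflexivity. Qed.

Lemma pentA W X Y Z : assoc_inv W X (Y ⊗ Z) ∘ (idm W ⊗' assoc X Y Z) ∘ assoc W (X ⊗ Y) Z
  = assoc (W ⊗ X) Y Z ∘ (assoc_inv W X Y ⊗' idm Z).
Proof.
  apply (cancel_l _ _ (assoc W X (Y ⊗ Z)) (assoc_inv W X (Y ⊗ Z))); [apply aiso1|].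
  norm. rw (aiso2 W X (Y ⊗ Z)). rw (pent W X Y Z). rw (wr (aiso2 W X Y)). reflexivity.
Qed.
Lemma pentB W X Y Z : (idm W ⊗' assoc_inv X Y Z) ∘ assoc W X (Y ⊗ Z) ∘ assoc (W ⊗ X) Y Z
  = assoc W (X ⊗ Y) Z ∘ (assoc W X Y ⊗' idm Z).
Proof.
  norm. rw (pent W X Y Z). rw (wl (aiso1 X Y Z)). reflexivity.
Qed.
Lemma pentI W X Y Z : assoc_inv (W ⊗ X) Y Z ∘ assoc_inv W X (Y ⊗ Z)
  = (assoc_inv W X Y ⊗' idm Z) ∘ assoc_inv W (X ⊗ Y) Z ∘ (idm W ⊗' assoc_inv X Y Z).
Proof.
  apply (cancel_r _ _ (assoc W X (Y ⊗ Z) ∘ assoc (W ⊗ X) Y Z) (assoc_inv (W ⊗ X) Y Z ∘ assoc_inv W X (Y ⊗ Z))).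
  { apply ciso; apply aiso2. }
  norm. rw (aiso1 W X (Y ⊗ Z)). rw (aiso1 (W ⊗ X) Y Z). rw (pent W X Y Z).
  rw (wl (aiso1 X Y Z)). rw (aiso1 W (X ⊗ Y) Z). rw (wr (aiso1 W X Y)). reflexivity.
Qed.

Definition sg (Y Z W : ob) : hom (Y ⊗ (Z ⊗ W)) (Z ⊗ (Y ⊗ W)) :=
  assoc Z Y W ∘ (braid Y Z ⊗' idm W) ∘ assoc_inv Y Z W.
Lemma sg_def Y Z W : sg Y Z W = assoc Z Y W ∘ (braid Y Z ⊗' idm W) ∘ assoc_inv Y Z W.
Proof. reflexivity. Qed.
Opaque sg.

Lemma S3 Y Z W1 W2 : (idm Z ⊗' assoc Y W1 W2) ∘ assoc Z (Y ⊗ W1) W2 ∘ (sg Y Z W1 ⊗' idm W2)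
  = sg Y Z (W1 ⊗ W2) ∘ (idm Y ⊗' assoc Z W1 W2) ∘ assoc Y (Z ⊗ W1) W2.
Proof.
  rewrite !sg_def. norm.
  rwl (pent Z Y W1 W2). rw (anat1 (Y := W1) (Z := W2) (braid Y Z)). rw (pentA Y Z W1 W2). reflexivity.
Qed.

Lemma hex2' X Y Z : braid (X ⊗ Y) Z ∘ assoc_inv X Y Z
  = assoc Z X Y ∘ (braid X Z ⊗' idm Y) ∘ assoc_inv X Z Y ∘ (idm X ⊗' braid Y Z).
Proof.
  apply (cancel_l _ _ (assoc_inv Z X Y) (assoc Z X Y)); [apply aiso2|].
  norm. rw (hex2 X Y Z). rw (aiso1 Z X Y). reflexivity.
Qed.
Lemma pentI' W X Y Z : assoc_inv W (X ⊗ Y) Z ∘ (idm W ⊗' assoc_inv X Y Z)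
  = (assoc W X Y ⊗' idm Z) ∘ assoc_inv (W ⊗ X) Y Z ∘ assoc_inv W X (Y ⊗ Z).
Proof.
  norm. rw (pentI W X Y Z). rw (wr (aiso2 W X Y)). reflexivity.
Qed.
Lemma S2 Y1 Y2 Z W : (idm Z ⊗' assoc Y1 Y2 W) ∘ sg (Y1 ⊗ Y2) Z W ∘ assoc_inv Y1 Y2 (Z ⊗ W)
  = sg Y1 Z (Y2 ⊗ W) ∘ (idm Y1 ⊗' sg Y2 Z W).
Proof.
  rewrite !sg_def. norm.
  rw (pentI Y1 Y2 Z W).
  rw (wr (W := W) (hex2' Y1 Y2 Z)).
  rwl (pent Z Y1 Y2 W).
  rw (anat1 (Y := Y2) (Z := W) (braid Y1 Z)).
  rwl (pentA Y1 Z Y2 W).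
  rw (anat (idm Y1) (braid Y2 Z) (idm W)).
  rw (aiso2 Y1 (Y2 ⊗ Z) W).
  reflexivity.
Qed.
Lemma S1 Y Z1 Z2 W : assoc Z1 Z2 (Y ⊗ W) ∘ sg Y (Z1 ⊗ Z2) W ∘ (idm Y ⊗' assoc_inv Z1 Z2 W)
  = (idm Z1 ⊗' sg Y Z2 W) ∘ sg Y Z1 (Z2 ⊗ W).
Proof.
  rewrite !sg_def. norm.
  rw (pent Z1 Z2 Y W).
  rw (pentI' Y Z1 Z2 W).
  rw (wr3 (W := W) (hex1 Y Z1 Z2)).
  rw (anat (idm Z1) (braid Y Z2) (idm W)).
  rwl (pentB Z1 Y Z2 W).
  rw (anat1 (Y := Z2) (Z := W) (braid Y Z1)).
  rw (aiso2 (Y ⊗ Z1) Z2 W).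
  reflexivity.
Qed.
Lemma sgnat {Y Y' Z Z' W W'} (f : hom Y Y') (g : hom Z Z') (h : hom W W') :
  sg Y' Z' W' ∘ (f ⊗' (g ⊗' h)) = (g ⊗' (f ⊗' h)) ∘ sg Y Z W.
Proof.
  rewrite !sg_def. norm.
  rw (a'nat f g h). rw (wn' h (bnat f g)). rw (anat g f h). reflexivity.
Qed.

Lemma ms_sg X Y Z W : mid_swap X Y Z W = assoc_inv X Z (Y ⊗ W) ∘ (idm X ⊗' sg Y Z W) ∘ assoc X Y (Z ⊗ W).
Proof. unfold mid_swap. rewrite sg_def. norm. reflexivity. Qed.
Opaque mid_swap.

Lemma S1' Y Z1 Z2 W : sg Y (Z1 ⊗ Z2) W ∘ (idm Y ⊗' assoc_inv Z1 Z2 W)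
  = assoc_inv Z1 Z2 (Y ⊗ W) ∘ (idm Z1 ⊗' sg Y Z2 W) ∘ sg Y Z1 (Z2 ⊗ W).
Proof.
  apply (cancel_l _ _ (assoc Z1 Z2 (Y ⊗ W)) (assoc_inv Z1 Z2 (Y ⊗ W))); [apply aiso1|].
  norm. rw (S1 Y Z1 Z2 W). rw (aiso2 Z1 Z2 (Y ⊗ W)). reflexivity.
Qed.
Lemma S2' Y1 Y2 Z W : sg Y1 Z (Y2 ⊗ W) ∘ (idm Y1 ⊗' sg Y2 Z W) ∘ assoc Y1 Y2 (Z ⊗ W)
  = (idm Z ⊗' assoc Y1 Y2 W) ∘ sg (Y1 ⊗ Y2) Z W.
Proof.
  norm. rwl (S2 Y1 Y2 Z W). rw (aiso1 Y1 Y2 (Z ⊗ W)). reflexivity.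
Qed.

Lemma C1 M1 N1 M2 N2 M3 N3 :
  (assoc M1 M2 M3 ⊗' assoc N1 N2 N3) ∘ mid_swap (M1 ⊗ M2) (N1 ⊗ N2) M3 N3 ∘ (mid_swap M1 N1 M2 N2 ⊗' idm (M3 ⊗ N3))
  = mid_swap M1 N1 (M2 ⊗ M3) (N2 ⊗ N3) ∘ (idm (M1 ⊗ N1) ⊗' mid_swap M2 N2 M3 N3) ∘ assoc (M1 ⊗ N1) (M2 ⊗ N2) (M3 ⊗ N3).
Proof.
  apply (cancel_l _ _ (assoc M1 (M2 ⊗ M3) (N1 ⊗ (N2 ⊗ N3))) (assoc_inv M1 (M2 ⊗ M3) (N1 ⊗ (N2 ⊗ N3)))); [apply aiso1|].
  rewrite !ms_sg. norm.
  rw (aiso2 M1 (M2 ⊗ M3) (N1 ⊗ (N2 ⊗ N3))).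
  rw (anat3 (X := M1) (Y := N1) (assoc_inv M2 M3 (N2 ⊗ N3))).
  rw (anat3 (X := M1) (Y := N1) (idm M2 ⊗' sg N2 M3 N3)).
  rw (anat3 (X := M1) (Y := N1) (assoc M2 N2 (M3 ⊗ N3))).
  rw (pent M1 N1 (M2 ⊗ N2) (M3 ⊗ N3)).
  rw (wl (W := M1) (S1' N1 M2 M3 (N2 ⊗ N3))).
  rw (wl (W := M1) (sgnat (idm N1) (idm M2) (sg N2 M3 N3))).
  rw (wl3 (W := M1) (eq_sym (S3 N1 M2 N2 (M3 ⊗ N3)))).
  rw (wl3 (W := M1) (wl3 (W := M2) (S2' N1 N2 M3 N3))).
  rewrite (tspr (assoc M1 M2 M3) (assoc N1 N2 N3)). norm.
  rw (anat3 (X := M1) (Y := M2 ⊗ M3) (assoc N1 N2 N3)).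
  rwl (pentB M1 M2 M3 ((N1 ⊗ N2) ⊗ N3)).
  rw (aiso2 (M1 ⊗ M2) M3 ((N1 ⊗ N2) ⊗ N3)).
  rw (anat3 (X := M1) (Y := M2) (sg (N1 ⊗ N2) M3 N3)).
  rw (pent M1 M2 (N1 ⊗ N2) (M3 ⊗ N3)).
  rw (wr (W := M3 ⊗ N3) (aiso2 M1 M2 (N1 ⊗ N2))).
  rw (anat (idm M1) (sg N1 M2 N2) (idm (M3 ⊗ N3))).
  rw (wl (W := M1) (eq_sym (a'nat3 (X := M2) (Y := M3) (assoc N1 N2 N3)))).
  reflexivity.
Qed.

Lemma S2r Y1 Y2 Z W : (idm Z ⊗' assoc Y1 Y2 W) ∘ sg (Y1 ⊗ Y2) Z W
  = sg Y1 Z (Y2 ⊗ W) ∘ (idm Y1 ⊗' sg Y2 Z W) ∘ assoc Y1 Y2 (Z ⊗ W).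
Proof.
  apply (cancel_r _ _ (assoc_inv Y1 Y2 (Z ⊗ W)) (assoc Y1 Y2 (Z ⊗ W))); [apply aiso1|].
  norm. rw (S2 Y1 Y2 Z W). rw (aiso2 Y1 Y2 (Z ⊗ W)). reflexivity.
Qed.
Lemma S3r Y Z W1 W2 : (idm Z ⊗' assoc_inv Y W1 W2) ∘ sg Y Z (W1 ⊗ W2)
  = assoc Z (Y ⊗ W1) W2 ∘ (sg Y Z W1 ⊗' idm W2) ∘ assoc_inv Y (Z ⊗ W1) W2 ∘ (idm Y ⊗' assoc_inv Z W1 W2).
Proof.
  apply (cancel_l _ _ (idm Z ⊗' assoc Y W1 W2) (idm Z ⊗' assoc_inv Y W1 W2)).
  { rewrite (wl (aiso1 _ _ _)), tid. reflexivity. }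
  norm. rw (wl (aiso2 Y W1 W2)). rw (S3 Y Z W1 W2). rw (aiso2 Y (Z ⊗ W1) W2). rw (wl (aiso2 Z W1 W2)).
  reflexivity.
Qed.

Lemma C4 M N P M' N' P' :
  assoc_inv (M ⊗ M') (N ⊗ N') (P ⊗ P') ∘ (idm (M ⊗ M') ⊗' mid_swap N P N' P') ∘ mid_swap M (N ⊗ P) M' (N' ⊗ P')
  = (mid_swap M N M' N' ⊗' idm (P ⊗ P')) ∘ mid_swap (M ⊗ N) P (M' ⊗ N') P' ∘ (assoc_inv M N P ⊗' assoc_inv M' N' P').
Proof.
  apply (cancel_l _ _ (assoc M M' ((N ⊗ N') ⊗ (P ⊗ P')) ∘ assoc (M ⊗ M') (N ⊗ N') (P ⊗ P'))
                      (assoc_inv (M ⊗ M') (N ⊗ N') (P ⊗ P') ∘ assoc_inv M M' ((N ⊗ N') ⊗ (P ⊗ P')))).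
  { apply ciso; apply aiso1. }
  rewrite !ms_sg. norm.
  rw (aiso2 (M ⊗ M') (N ⊗ N') (P ⊗ P')).
  rw (anat3 (X := M) (Y := M') (assoc_inv N N' (P ⊗ P'))).
  rw (anat3 (X := M) (Y := M') (idm N ⊗' sg P N' P')).
  rw (anat3 (X := M) (Y := M') (assoc N P (N' ⊗ P'))).
  rw (aiso2 M M' ((N ⊗ P) ⊗ (N' ⊗ P'))).
  rw (wl (W := M) (S2r N P M' (N' ⊗ P'))).
  rw (wl (W := M) (eq_sym (sgnat (idm N) (idm M') (sg P N' P')))).
  rw (wl (W := M) (S3r N M' N' (P ⊗ P'))).
  rw (wl3 (W := M) (wl3 (W := N) (eq_sym (S1' P M' N' P')))).
  rw (pent M M' (N ⊗ N') (P ⊗ P')).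
  rw (wr (W := P ⊗ P') (aiso2 M M' (N ⊗ N'))).
  rw (anat (idm M) (sg N M' N') (idm (P ⊗ P'))).
  rwl (pentB M N (M' ⊗ N') (P ⊗ P')).
  rw (aiso2 (M ⊗ N) (M' ⊗ N') (P ⊗ P')).
  rw (anat3 (X := M) (Y := N) (sg P (M' ⊗ N') P')).
  rw (pent M N P ((M' ⊗ N') ⊗ P')).
  rewrite (tspl (assoc_inv M N P) (assoc_inv M' N' P')). norm.
  rw (wr (W := (M' ⊗ N') ⊗ P') (aiso2 M N P)).
  rw (anat3 (X := M) (Y := N ⊗ P) (assoc_inv M' N' P')).
  rw (wl (W := M) (anat3 (X := N) (Y := P) (assoc_inv M' N' P'))).
  reflexivity.
Qed.

Lemma msnat {X X' Y Y' Z Z' W W'} (f : hom X X') (g : hom Y Y') (h : hom Z Z') (k : hom W W') :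
  mid_swap X' Y' Z' W' ∘ ((f ⊗' g) ⊗' (h ⊗' k)) = ((f ⊗' h) ⊗' (g ⊗' k)) ∘ mid_swap X Y Z W.
Proof.
  rewrite !ms_sg. norm.
  rw (anat f g (h ⊗' k)). rw (wn f (sgnat g h k)). rw (a'nat f h (g ⊗' k)). reflexivity.
Qed.

Lemma sgL X Y : lunit (X ⊗ Y) ∘ sg X 𝟙 Y = idm X ⊗' lunit Y.
Proof. rewrite sg_def. norm. rw (K1 X Y). rw (wr (W := Y) (B1 X)). rw (tri' X Y). reflexivity. Qed.
Lemma sgL2 M N : (idm M ⊗' lunit N) ∘ sg 𝟙 M N = lunit (M ⊗ N).
Proof. rewrite sg_def. norm. rw (tri M N). rw (wr (W := N) (B2 M)). rw (K1' M N). reflexivity. Qed.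
Lemma sgR Y : runit Y ∘ (idm Y ⊗' runit 𝟙) ∘ sg 𝟙 Y 𝟙 = lunit Y ∘ (idm 𝟙 ⊗' runit Y).
Proof.
  rewrite sg_def. norm. rw (K2 Y 𝟙). rwl (rnat (runit Y)). rw (wr (W := 𝟙) (B2 Y)).
  rw (rnat (lunit Y)). rw (K2' 𝟙 Y). reflexivity.
Qed.
Lemma sgR2 N : lunit N ∘ (idm 𝟙 ⊗' runit N) ∘ sg N 𝟙 𝟙 = runit N ∘ (idm N ⊗' runit 𝟙).
Proof.
  rewrite sg_def. norm. rw (K2 𝟙 N). rwl (rnat (lunit N)). rw (wr (W := 𝟙) (B1 N)).
  rw (rnat (runit N)). rw (K2' N 𝟙). reflexivity.
Qed.

Lemma C5 X Y : lunit (X ⊗ Y) ∘ (lunit 𝟙 ⊗' idm (X ⊗ Y)) ∘ mid_swap 𝟙 X 𝟙 Y = lunit X ⊗' lunit Y.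
Proof.
  rewrite ms_sg. norm.
  rw (K1' 𝟙 (X ⊗ Y)). rw (lnat (sg X 𝟙 Y)). rw (K1 X (𝟙 ⊗ Y)). rw (sgL X Y).
  rewrite (tspr (lunit X) (lunit Y)). reflexivity.
Qed.
Lemma C5' X Y : runit (X ⊗ Y) ∘ (idm (X ⊗ Y) ⊗' lunit 𝟙) ∘ mid_swap X 𝟙 Y 𝟙 = runit X ⊗' runit Y.
Proof.
  rewrite ms_sg, K3. norm.
  rw (eq_sym (a'nat3 (X := X) (Y := Y) (runit 𝟙))).
  rw (K2' X Y). rw (wl3 (W := X) (sgR Y)).
  rw (eq_sym (anat3 (X := X) (Y := 𝟙) (runit Y))).
  rw (tri X Y).
  rewrite (tspl (runit X) (runit Y)). reflexivity.
Qed.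
Lemma C2 M N : (lunit M ⊗' lunit N) ∘ mid_swap 𝟙 𝟙 M N = lunit (M ⊗ N) ∘ (lunit 𝟙 ⊗' idm (M ⊗ N)).
Proof.
  rewrite ms_sg, K3. rewrite (tspl (lunit M) (lunit N)). norm.
  rw (eq_sym (a'nat3 (X := 𝟙) (Y := M) (lunit N))).
  rw (K1' M N). rw (wl (W := 𝟙) (sgL2 M N)). rw (tri 𝟙 (M ⊗ N)). reflexivity.
Qed.
Lemma C3 M N : (runit M ⊗' runit N) ∘ mid_swap M N 𝟙 𝟙 = runit (M ⊗ N) ∘ (idm (M ⊗ N) ⊗' lunit 𝟙).
Proof.
  rewrite ms_sg, K3. rewrite (tspl (runit M) (runit N)). norm.
  rw (eq_sym (a'nat3 (X := M) (Y := 𝟙) (runit N))).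
  rw (tri' M N). rw (wl3 (W := M) (sgR2 N)).
  rw (eq_sym (anat3 (X := M) (Y := N) (runit 𝟙))).
  rw (K2 M N). reflexivity.
Qed.

Ltac lnorm := repeat rewrite <- cA.
Tactic Notation "rwa" uconstr(T) :=
  first [ rewrite (ctx5 T) | rewrite (ra5 T) | rewrite (ctx4 T) | rewrite (ra4 T)
        | rewrite (ctx3 T) | rewrite (ra3 T) | rewrite (ctx2 T) | rewrite T ]; lnorm.

Lemma msnatL {X X' Y Y' Z W} (f : hom X X') (g : hom Y Y') :
  mid_swap X' Y' Z W ∘ ((f ⊗' g) ⊗' idm (Z ⊗ W)) = ((f ⊗' idm Z) ⊗' (g ⊗' idm W)) ∘ mid_swap X Y Z W.
Proof. rewrite <- tid, msnat. reflexivity. Qed.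
Lemma msnatR {X Y Z Z' W W'} (h : hom Z Z') (k : hom W W') :
  mid_swap X Y Z' W' ∘ (idm (X ⊗ Y) ⊗' (h ⊗' k)) = ((idm X ⊗' h) ⊗' (idm Y ⊗' k)) ∘ mid_swap X Y Z W.
Proof. rewrite <- tid, msnat. reflexivity. Qed.

Definition tmu2 (M N : ob) (mM : hom (M ⊗ M) M) (mN : hom (N ⊗ N) N) : hom ((M ⊗ N) ⊗ (M ⊗ N)) (M ⊗ N) :=
  (mM ⊗' mN) ∘ mid_swap M N M N.
Definition tu2 {M N : ob} (uM : hom 𝟙 M) (uN : hom 𝟙 N) : hom 𝟙 (M ⊗ N) := (uM ⊗' uN) ∘ lunit_inv 𝟙.

Lemma T1 M N mM uM mN uN : is_monoid M mM uM -> is_monoid N mN uN ->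
  is_monoid (M ⊗ N) (tmu2 M N mM mN) (tu2 uM uN).
Proof.
  intros [aM [lM rM]] [aN [lN rN]]. unfold tmu2, tu2. split; [|split].
  - lnorm. rewrite (tsl (mid_swap M N M N) (mM ⊗' mN) (idm (M ⊗ N))). lnorm.
    rwa (msnatL (Z := M) (W := N) mM mN).
    rwa (eq_sym (tcomp (mM ⊗' idm M) mM (mN ⊗' idm N) mN)).
    rewrite aM, aN.
    rewrite (tcomp (assoc M M M) (mM ∘ (idm M ⊗' mM)) (assoc N N N) (mN ∘ (idm N ⊗' mN))). lnorm.
    rwa (C1 M N M N M N).
    rewrite (tcomp (idm M ⊗' mM) mM (idm N ⊗' mN) mN). lnorm.
    rwa (eq_sym (msnatR (X := M) (Y := N) mM mN)).
    rewrite (tsr (idm (M ⊗ N)) (mid_swap M N M N) (mM ⊗' mN)). lnorm. reflexivity.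
  - rewrite (tsl (lunit_inv 𝟙) (uM ⊗' uN) (idm (M ⊗ N))). lnorm.
    rwa (msnatL (Z := M) (W := N) uM uN).
    rwa (eq_sym (tcomp (uM ⊗' idm M) mM (uN ⊗' idm N) mN)).
    rewrite lM, lN. rwa (C2 M N). rwa (wr (W := M ⊗ N) (liso2 𝟙)). rewrite tid, idr. reflexivity.
  - rewrite (tsr (idm (M ⊗ N)) (lunit_inv 𝟙) (uM ⊗' uN)). lnorm.
    rwa (msnatR (X := M) (Y := N) uM uN).
    rwa (eq_sym (tcomp (idm M ⊗' uM) mM (idm N ⊗' uN) mN)).
    rewrite rM, rN. rwa (C3 M N). rwa (wl (W := M ⊗ N) (liso2 𝟙)). rewrite tid, idr. reflexivity.
Qed.

Lemma T2 {M N M' N'} mM uM mN uN mM' uM' mN' uN' (f : hom M M') (g : hom N N') :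
  monoid_hom M mM uM M' mM' uM' f -> monoid_hom N mN uN N' mN' uN' g ->
  monoid_hom (M ⊗ N) (tmu2 M N mM mN) (tu2 uM uN) (M' ⊗ N') (tmu2 M' N' mM' mN') (tu2 uM' uN') (f ⊗' g).
Proof.
  intros [fm fu] [gm gu]. unfold tmu2, tu2. split.
  - lnorm. rwa (msnat f g f g). rwa (eq_sym (tcomp (f ⊗' f) mM' (g ⊗' g) mN')).
    rewrite <- fm, <- gm, tcomp. lnorm. reflexivity.
  - lnorm. rwa (eq_sym (tcomp uM f uN g)). rewrite fu, gu. reflexivity.
Qed.
Lemma T6 {M N P} mM uM mN uN mP uP (f : hom M N) (g : hom N P) :
  monoid_hom M mM uM N mN uN f -> monoid_hom N mN uN P mP uP g -> monoid_hom M mM uM P mP uP (g ∘ f).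
Proof.
  intros [fm fu] [gm gu]. split.
  - rewrite <- cA, fm, cA, gm, <- cA, tcomp. reflexivity.
  - rewrite <- cA, fu, gu. reflexivity.
Qed.
Lemma Tid M mM uM : monoid_hom M mM uM M mM uM (idm M).
Proof. split. rewrite idl, tid, idr. reflexivity. apply idl. Qed.

Lemma U3a : assoc_inv 𝟙 𝟙 𝟙 ∘ (idm 𝟙 ⊗' lunit_inv 𝟙) = lunit_inv 𝟙 ⊗' idm 𝟙.
Proof.
  apply (cancel_l _ _ (lunit 𝟙 ⊗' idm 𝟙) (lunit_inv 𝟙 ⊗' idm 𝟙)).
  { rewrite (wr (liso1 𝟙)), tid. reflexivity. }
  rwa (K1' 𝟙 𝟙). rewrite K0. rewrite (wl (liso2 𝟙)), (wr (liso2 𝟙)). reflexivity.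
Qed.

Lemma T3 M N P mM uM mN uN mP uP :
  monoid_hom (M ⊗ (N ⊗ P)) (tmu2 M (N ⊗ P) mM (tmu2 N P mN mP)) (tu2 uM (tu2 uN uP))
             ((M ⊗ N) ⊗ P) (tmu2 (M ⊗ N) P (tmu2 M N mM mN) mP) (tu2 (tu2 uM uN) uP)
             (assoc_inv M N P).
Proof.
  unfold tmu2, tu2. split.
  - lnorm. rewrite (tsr mM (mid_swap N P N P) (mN ⊗' mP)). lnorm.
    rwa (a'nat mM mN mP).
    rewrite (tsl (mid_swap M N M N) (mM ⊗' mN) mP). lnorm.
    rwa (C4 M N P M N P). reflexivity.
  - lnorm. rewrite (tsr uM (lunit_inv 𝟙) (uN ⊗' uP)). lnorm.
    rwa (a'nat uM uN uP).
    rwa U3a.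
    rewrite (tsl (lunit_inv 𝟙) (uM ⊗' uN) uP). lnorm. reflexivity.
Qed.

Lemma T4 B mB uB :
  monoid_hom (𝟙 ⊗ B) (tmu2 𝟙 B unit_mu mB) (tu2 unit_u uB) B mB uB (lunit B).
Proof.
  unfold tmu2, tu2, unit_mu, unit_u. split.
  - rewrite (tspr (lunit 𝟙) mB). lnorm. rwa (lnat mB). rwa (C5 B B). reflexivity.
  - lnorm. rwa (lnat uB). rwa (liso2 𝟙). apply idr.
Qed.
Lemma T5 B mB uB :
  monoid_hom (B ⊗ 𝟙) (tmu2 B 𝟙 mB unit_mu) (tu2 uB unit_u) B mB uB (runit B).
Proof.
  unfold tmu2, tu2, unit_mu, unit_u. split.
  - rewrite (tspl mB (lunit 𝟙)). lnorm. rwa (rnat mB). rwa (C5' B B). reflexivity.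
  - lnorm. rwa (rnat uB). rewrite <- K3. rwa (liso2 𝟙). apply idr.
Qed.

Lemma comod_r {A B} (rho : hom A (A ⊗ B)) (e : hom B 𝟙) :
  runit A ∘ (idm A ⊗' e) ∘ rho = idm A -> (idm A ⊗' e) ∘ rho = runit_inv A.
Proof.
  intros H. apply (cancel_l _ _ (runit A) (runit_inv A)); [apply riso1|].
  rewrite cA, H, riso2. reflexivity.
Qed.
Lemma comod_d {A B} (rho : hom A (A ⊗ B)) (d : hom B (B ⊗ B)) :
  assoc_inv A B B ∘ (idm A ⊗' d) ∘ rho = (rho ⊗' idm B) ∘ rho ->
  (idm A ⊗' d) ∘ rho = assoc A B B ∘ (rho ⊗' idm B) ∘ rho.
Proof.
  intros H. apply (cancel_l _ _ (assoc_inv A B B) (assoc A B B)); [apply aiso2|].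
  rewrite cA, H, <- !cA, (cA _ _ (assoc_inv A B B)), aiso1, idl. reflexivity.
Qed.

Lemma main
  (Omega : Type) (s t : Omega -> nat) (A : ob) (opsA : magma_ops Omega s t A)
  (D : forall Q : ob, hom (Q ⊗ Q) Q -> hom 𝟙 Q -> hom A (A ⊗ Q) -> Prop)
  (B0 : ob) (mu0 : hom (B0 ⊗ B0) B0) (u0 : hom 𝟙 B0) (rho0 : hom A (A ⊗ B0)) :
  (forall Q mu u rho, D Q mu u rho -> is_monoid Q mu u /\ is_comeasuring Omega s t A A opsA opsA Q mu u rho) ->
  D B0 mu0 u0 rho0 ->
  (forall Q mu u rho, D Q mu u rho ->
     exists! phi : hom B0 Q, monoid_hom B0 mu0 u0 Q mu u phi /\ (idm A ⊗' phi) ∘ rho0 = rho) ->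
  (forall Q1 mu1 u1 rho Q2 mu2 u2 (tau : hom Q1 Q2),
     D Q1 mu1 u1 rho -> is_monoid Q2 mu2 u2 -> monoid_hom Q1 mu1 u1 Q2 mu2 u2 tau ->
     D Q2 mu2 u2 ((idm A ⊗' tau) ∘ rho)) ->
  D 𝟙 unit_mu unit_u (runit_inv A) ->
  D (B0 ⊗ B0) (tmu B0 mu0) (tu B0 u0) (assoc A B0 B0 ∘ (rho0 ⊗' idm B0) ∘ rho0) ->
  exists (d0 : hom B0 (B0 ⊗ B0)) (e0 : hom B0 𝟙),
    is_coaction Omega s t A opsA B0 mu0 u0 d0 e0 rho0 /\
    (forall (d : hom B0 (B0 ⊗ B0)) (e : hom B0 𝟙),
       is_coaction Omega s t A opsA B0 mu0 u0 d e rho0 -> d = d0 /\ e = e0) /\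
    (forall (B : ob) (mu : hom (B ⊗ B) B) (u : hom 𝟙 B) (d : hom B (B ⊗ B))
            (e : hom B 𝟙) (rho : hom A (A ⊗ B)),
       is_coaction Omega s t A opsA B mu u d e rho -> D B mu u rho ->
       exists! phi : hom B0 B,
         bimonoid_hom B0 mu0 u0 d0 e0 B mu u d e phi /\ (idm A ⊗' phi) ∘ rho0 = rho).
Proof.
  intros Hobj HD0 Hinit Hco HD1 HD2.
  destruct (Hobj _ _ _ _ HD0) as [HmB0 HcB0].
  destruct (Hinit _ _ _ _ HD2) as [d0 [[Hd0m Hd0r] Hd0u]].
  destruct (Hinit _ _ _ _ HD1) as [e0 [[He0m He0r] He0u]].
  destruct (Hinit _ _ _ _ HD0) as [i0 [[Hi0m Hi0r] Hi0u]].
  change (tmu B0 mu0) with (tmu2 B0 B0 mu0 mu0) in *.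
  change (tu B0 u0) with (tu2 u0 u0) in *.
  assert (HmB2 : is_monoid (B0 ⊗ B0) (tmu2 B0 B0 mu0 mu0) (tu2 u0 u0)) by (apply T1; assumption).
  assert (Hcoass : (d0 ⊗' idm B0) ∘ d0 = assoc_inv B0 B0 B0 ∘ (idm B0 ⊗' d0) ∘ d0).
  { assert (HD3 := Hco _ _ _ _ ((B0 ⊗ B0) ⊗ B0) (tmu2 (B0 ⊗ B0) B0 (tmu2 B0 B0 mu0 mu0) mu0)
                     (tu2 (tu2 u0 u0) u0) (d0 ⊗' idm B0) HD2 (T1 _ _ _ _ _ _ HmB2 HmB0)
                     (T2 _ _ _ _ _ _ _ _ _ _ Hd0m (Tid _ _ _))).
    destruct (Hinit _ _ _ _ HD3) as [p [_ Hpu]].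
    assert (E1 : p = (d0 ⊗' idm B0) ∘ d0).
    { apply Hpu. split.
      + eapply T6; [exact Hd0m|]. exact (T2 _ _ _ _ _ _ _ _ _ _ Hd0m (Tid _ _ _)).
      + norm. rw Hd0r. reflexivity. }
    assert (E2 : p = assoc_inv B0 B0 B0 ∘ (idm B0 ⊗' d0) ∘ d0).
    { apply Hpu. split.
      + eapply T6; [exact Hd0m|]. eapply T6; [exact (T2 _ _ _ _ _ _ _ _ _ _ (Tid _ _ _) Hd0m)|apply T3].
      + norm. rw Hd0r. rw (eq_sym (anat3 (X := A) (Y := B0) d0)). rw (eq_sym (xch rho0 d0)).
        rw Hd0r. rw (eq_sym (anat (idm A) d0 (idm B0))). rw (wr (W := B0) Hd0r).
        rw (eq_sym (anat1 (Y := B0) (Z := B0) rho0)). rw (pentB A B0 B0 B0). reflexivity. }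
    rewrite <- E1, <- E2. reflexivity. }
  assert (Hcl : lunit B0 ∘ (e0 ⊗' idm B0) ∘ d0 = idm B0).
  { transitivity i0; [symmetry; apply Hi0u|apply Hi0u].
    - split.
      + eapply T6; [exact Hd0m|]. eapply T6; [exact (T2 _ _ _ _ _ _ _ _ _ _ He0m (Tid _ _ _))|apply T4].
      + norm. rw Hd0r. rw (eq_sym (anat (idm A) e0 (idm B0))). rw (wr (W := B0) He0r).
        rw (tri A B0). rw (wr (W := B0) (riso2 A)). reflexivity.
    - split. apply Tid. rewrite tid, idl. reflexivity. }
  assert (Hcr : runit B0 ∘ (idm B0 ⊗' e0) ∘ d0 = idm B0).
  { transitivity i0; [symmetry; apply Hi0u|apply Hi0u].
    - split.
      + eapply T6; [exact Hd0m|]. eapply T6; [exact (T2 _ _ _ _ _ _ _ _ _ _ (Tid _ _ _) He0m)|apply T5].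
      + norm. rw Hd0r. rw (eq_sym (anat3 (X := A) (Y := B0) e0)). rw (eq_sym (xch rho0 e0)).
        rw He0r. rw (K2 A B0). rw (rnat rho0). rw (riso2 A). reflexivity.
    - split. apply Tid. rewrite tid, idl. reflexivity. }
  assert (Hcoact : is_coaction Omega s t A opsA B0 mu0 u0 d0 e0 rho0).
  { split; [|split].
    - split; [exact HmB0|split; [|split; [exact Hd0m|exact He0m]]].
      split; [|split; [exact Hcl|exact Hcr]].
      rewrite <- cA, Hcoass. norm. rw (aiso2 B0 B0 B0). reflexivity.
    - exact HcB0.
    - split.
      + rewrite <- cA, Hd0r. norm. rw (aiso1 A B0 B0). reflexivity.
      + rewrite <- cA, He0r. apply riso2. }
  exists d0, e0. split; [exact Hcoact|split].
  - intros d e [[_ [_ [Hdm Hem]]] [_ [Hdr Her]]].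
    split.
    + symmetry. apply Hd0u. split. exact Hdm. apply comod_d. exact Hdr.
    + symmetry. apply He0u. split. exact Hem. apply comod_r. exact Her.
  - intros B mu u d e rho [[HmB [_ [Hdm Hem]]] [_ [Hdr Her]]] HDB.
    destruct (Hinit _ _ _ _ HDB) as [phi [[Hpm Hpr] Hpu]].
    exists phi. split.
    + split; [|exact Hpr]. split; [exact Hpm|split].
      * assert (HDB2 := Hco _ _ _ _ _ _ _ d HDB (T1 _ _ _ _ _ _ HmB HmB) Hdm).
        destruct (Hinit _ _ _ _ HDB2) as [q [_ Hqu]].
        transitivity q; [symmetry; apply Hqu|apply Hqu].
        -- split. eapply T6; [exact Hpm|exact Hdm]. norm. rw Hpr. reflexivity.
        -- split. eapply T6; [exact Hd0m|exact (T2 _ _ _ _ _ _ _ _ _ _ Hpm Hpm)].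
           rewrite (comod_d _ _ Hdr). norm. rw Hd0r. rw (eq_sym (anat (idm A) phi phi)).
           rewrite (tspl (idm A ⊗' phi) phi). norm. rw (eq_sym (xch rho0 phi)).
           rw (wr (W := B) Hpr). rw Hpr. reflexivity.
      * destruct (Hinit _ _ _ _ HD1) as [q [_ Hqu]].
        transitivity q; [symmetry; apply Hqu|apply Hqu].
        -- split. eapply T6; [exact Hpm|exact Hem]. norm. rw Hpr. apply comod_r. exact Her.
        -- split. exact He0m. exact He0r.
    + intros phi' [[Hm _] Hr]. apply Hpu. split; assumption.
Qed.
End Coh.

Theorem theorem4p31
  (ob : Type) (hom : ob -> ob -> Type) (C : @BMCData ob hom) (HC : is_bmc ob hom C)
  (Omega : Type) (s t : Omega -> nat) (A : ob) (opsA : magma_ops Omega s t A)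
  (* the full subcategory D of Comeas(A,A), given by its class of objects *)
  (D : forall Q : ob, hom (Q ⊗ Q) Q -> hom 𝟙 Q -> hom A (A ⊗ Q) -> Prop)
  (B0 : ob) (mu0 : hom (B0 ⊗ B0) B0) (u0 : hom 𝟙 B0) (rho0 : hom A (A ⊗ B0)) :
  (* objects of D are objects of Comeas(A,A) *)
  (forall Q mu u rho, D Q mu u rho -> is_monoid Q mu u /\ is_comeasuring Omega s t A A opsA opsA Q mu u rho) ->
  (* rho0 is an initial object of D *)
  D B0 mu0 u0 rho0 ->
  (forall Q mu u rho, D Q mu u rho ->
     exists! phi : hom B0 Q, monoid_hom B0 mu0 u0 Q mu u phi /\ (idm A ⊗' phi) ∘ rho0 = rho) ->
  (* D is closed under coarsenings *)
  (forall Q1 mu1 u1 rho Q2 mu2 u2 (tau : hom Q1 Q2),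
     D Q1 mu1 u1 rho -> is_monoid Q2 mu2 u2 -> monoid_hom Q1 mu1 u1 Q2 mu2 u2 tau ->
     D Q2 mu2 u2 ((idm A ⊗' tau) ∘ rho)) ->
  (* A -> A ⊗ 𝟙 (for the monoid 𝟙) is in D *)
  D 𝟙 unit_mu unit_u (runit_inv A) ->
  (* (rho0 ⊗ id) rho0 : A -> A ⊗ (B0 ⊗ B0) (for the monoid B0 ⊗ B0) is in D *)
  D (B0 ⊗ B0) (tmu B0 mu0) (tu B0 u0) (assoc A B0 B0 ∘ (rho0 ⊗' idm B0) ∘ rho0) ->
  exists (d0 : hom B0 (B0 ⊗ B0)) (e0 : hom B0 𝟙),
    is_coaction Omega s t A opsA B0 mu0 u0 d0 e0 rho0 /\
    (forall (d : hom B0 (B0 ⊗ B0)) (e : hom B0 𝟙),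
       is_coaction Omega s t A opsA B0 mu0 u0 d e rho0 -> d = d0 /\ e = e0) /\
    (forall (B : ob) (mu : hom (B ⊗ B) B) (u : hom 𝟙 B) (d : hom B (B ⊗ B))
            (e : hom B 𝟙) (rho : hom A (A ⊗ B)),
       is_coaction Omega s t A opsA B mu u d e rho -> D B mu u rho ->
       exists! phi : hom B0 B,
         bimonoid_hom B0 mu0 u0 d0 e0 B mu u d e phi /\ (idm A ⊗' phi) ∘ rho0 = rho).
Proof.
  exact (@main ob hom C HC Omega s t A opsA D B0 mu0 u0 rho0).
Qed.
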